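(* Let $\mathcal{B}$ be a spherical building and $C$ a chamber of $\mathcal{B}$. Then $\mathrm{Opp}(C)$ is a flag complex.
   Context: $\mathrm{Opp}(C)$ denotes the subcomplex of $\mathcal{B}$ consisting of the simplices opposite to $C$, i.e. the chambers opposite to $C$ and their faces; two chambers are opposite if in an apartment containing both they lie on opposite sides of every wall. A simplicial complex is flag if every finite set of vertices that are pairwise joined by edges spans a simplex. *)

(* Defs.v *)
(* Spherical buildings via the W-metric (Weyl distance)
   definition of Abramenko--Brown, Def. 5.1, with a finite Coxeter group W. *)
From mathcomp Require Import all_boot all_fingroup.
Set Implicit Arguments. Unset Strict Implicit. Unset Printing Implicit Defensive.
Local Open Scope group_scope.

(* An abstract (possibly infinite) group, used as target of the universal
   property of a Coxeter presentation. *)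
Definition is_group (G : Type) (mul : G -> G -> G) (one : G) (inv : G -> G) :=
  [/\ forall x y z, mul x (mul y z) = mul (mul x y) z,
      forall x, mul one x = x, forall x, mul x one = x,
      forall x, mul (inv x) x = one & forall x, mul x (inv x) = one].

Fixpoint gpow (G : Type) (mul : G -> G -> G) (one : G) (x : G) (n : nat) : G :=
  if n is n'.+1 then mul x (gpow mul one x n') else one.

(* (W,S) is a Coxeter system: S is a set of involutions generating W, and W is
   presented by S subject to the relations (s t)^m(s,t) = 1, m(s,t) = #[s t]
   (universal property with respect to every group). *)
Definition coxeter_system (W : finGroupType) (S : {set W}) : Prop :=
  [/\ 1 \notin S, {in S, forall s, s * s = 1}, <<S>> = [set: W] &
      forall (G : Type) (mul : G -> G -> G) (one : G) (inv : G -> G),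
        is_group mul one inv ->
        forall f : W -> G,
          {in S &, forall s t, gpow mul one (mul (f s) (f t)) #[s * t] = one} ->
          exists phi : W -> G,
            (forall x y, phi (x * y) = mul (phi x) (phi y)) /\
            {in S, forall s, phi s = f s}].

Definition Sball (W : finGroupType) (S : {set W}) (n : nat) : {set W} :=
  iter n (fun A => A * (1 |: S)) [set 1].

(* Word length l_S(w) (for w in <<S>> = W, this is < #|W|). *)
Definition lengthS (W : finGroupType) (S : {set W}) (w : W) : nat :=
  find (fun n => w \in Sball S n) (iota 0 #|W|).

Definition is_building (W : finGroupType) (S : {set W}) (Ch : Type)
    (delta : Ch -> Ch -> W) : Prop :=
  [/\ forall C D, delta C D = 1 <-> C = D,
      (forall C D C' s, s \in S -> delta C' C = s ->
          (delta C' D = s * delta C D \/ delta C' D = delta C D) /\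
          (lengthS S (s * delta C D) = (lengthS S (delta C D)).+1 ->
             delta C' D = s * delta C D)) &
      forall C D s, s \in S ->
          exists C', delta C' C = s /\ delta C' D = s * delta C D].

Definition opposite (W : finGroupType) (S : {set W}) (Ch : Type)
    (delta : Ch -> Ch -> W) (C D : Ch) : Prop :=
  forall w : W, lengthS S w <= lengthS S (delta C D).

(* The vertex of type s of the chamber D is the (S \ {s})-residue of D.
   [has_vertex s D E] : the chamber E contains this vertex. *)
Definition has_vertex (W : finGroupType) (S : {set W}) (Ch : Type)
    (delta : Ch -> Ch -> W) (s : W) (D E : Ch) : Prop :=
  delta D E \in <<S :\ s>>.

(* Opp(C) is a flag complex: a finite family of vertices (given as
   (type, chamber) pairs) that are vertices of Opp(C) and pairwise joined by
   edges of Opp(C) (i.e. pairwise contained in a chamber opposite C) spans a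
   simplex of Opp(C) (i.e. all lie in a common chamber opposite C). *)
Definition Opp_is_flag (W : finGroupType) (S : {set W}) (Ch : Type)
    (delta : Ch -> Ch -> W) (C : Ch) : Prop :=
  forall (I : finType) (typ : I -> W) (ch : I -> Ch),
    (forall i, typ i \in S) ->
    (forall i j, exists E, opposite S delta C E /\
        has_vertex S delta (typ i) (ch i) E /\ has_vertex S delta (typ j) (ch j) E) ->
    exists E, opposite S delta C E /\
      forall i, has_vertex S delta (typ i) (ch i) E.

(* Main.v *)
Require Import Defs.
From mathcomp Require Import all_boot all_fingroup.
From Stdlib Require Import Classical.
Set Implicit Arguments. Unset Strict Implicit. Unset Printing Implicit Defensive.
Local Open Scope group_scope.

Lemma classical_min (P : nat -> Prop) : (exists n, P n) ->
  exists n, P n /\ forall m, P m -> n <= m.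
Proof.
move=> [n Pn].
suff H : forall k n, n <= k -> P n -> exists n, P n /\ forall m, P m -> n <= m.
  exact: (H n n (leqnn n) Pn).
elim=> [|k IH] n' Hn Pn'.
  exists n'; split => // m _; move: Hn; rewrite leqn0 => /eqP ->; done.
case: (classic (exists2 m, m < n' & P m)) => [[m Hm Pm]|Hno].
  by apply: (IH m) => //; rewrite -ltnS (leq_trans Hm Hn).
by exists n'; split => // m Pm; rewrite leqNgt; apply/negP => Hm; apply: Hno; exists m.
Qed.

Section Words.
Variable W : finGroupType.

Definition prodw (ws : seq W) : W := foldr mulg 1 ws.
Definition wordS (J : {set W}) (ws : seq W) := all (fun x => x \in J) ws.
Implicit Types (J K A : {set W}) (ws : seq W).

Lemma prodw_cat a b : prodw (a ++ b) = prodw a * prodw b.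
Proof. by elim: a => [|x a IH] /=; rewrite ?mul1g // IH mulgA. Qed.

Lemma wordS_gen J ws : wordS J ws -> prodw ws \in <<J>>.
Proof.
rewrite /wordS; elim: ws => [|x ws IH] /=; first by rewrite group1.
by case/andP=> Hx Hws; apply: groupM; [apply: mem_gen | apply: IH].
Qed.

Lemma wordS_sub J K ws : J \subset K -> wordS J ws -> wordS K ws.
Proof. by move=> /subsetP JK /allP H; apply/allP=> x /H /JK. Qed.

Fixpoint delete (j : nat) (s : seq W) :=
  match s, j with
  | [::], _ => [::]
  | a :: s', 0 => s'
  | a :: s', j'.+1 => a :: delete j' s'
  end.

Lemma size_delete j s : j < size s -> size (delete j s) = (size s).-1.
Proof.
elim: s j => [|a s IH] [|j] //= H.
by rewrite IH //; case: s H {IH} => //.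
Qed.

Lemma mem_delete j s x : x \in delete j s -> x \in s.
Proof.
elim: s j => [|a s IH] [|j] //=; first by move=> H; rewrite inE H orbT.
by rewrite !inE => /orP[->//|/IH ->]; rewrite orbT.
Qed.

Lemma wordS_delete J j s : wordS J s -> wordS J (delete j s).
Proof. by move=> /allP H; apply/allP=> x /mem_delete /H. Qed.

Lemma delete_cat_l j s1 s2 : j < size s1 -> delete j (s1 ++ s2) = delete j s1 ++ s2.
Proof. by elim: s1 j => [|a s1 IH] [|j] //= H; rewrite IH. Qed.

Lemma delete_cat_r j s1 s2 : size s1 <= j ->
  delete j (s1 ++ s2) = s1 ++ delete (j - size s1) s2.
Proof.
elim: s1 j => [|a s1 IH] j H /=; first by rewrite subn0.
case: j H => // j H /=; rewrite IH //.
Qed.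

Lemma mem_mulg1 (x : W) (A B : {set W}) : x \in A -> 1 \in B -> x \in A * B.
Proof. by move=> Hx H1; have := mem_mulg Hx H1; rewrite mulg1. Qed.

Lemma Sball_S (A : {set W}) n : Sball A n.+1 = Sball A n * (1 |: A).
Proof. by []. Qed.

Lemma one_Sball A n : 1 \in Sball A n.
Proof.
elim: n => [|n IH]; first by rewrite /Sball /= set11.
by rewrite Sball_S mem_mulg1 // setU11.
Qed.

Lemma word_Sball A n ws : wordS A ws -> size ws <= n -> prodw ws \in Sball A n.
Proof.
elim: n ws => [|n IH] ws.
  by case: ws => //= _ _; rewrite /Sball /= set11.
case/lastP: ws => [|ws x]; first by rewrite one_Sball.
rewrite /wordS all_rcons size_rcons ltnS => /andP[Hx Hws] Hs.
rewrite Sball_S -cats1 prodw_cat /= mulg1 mem_mulg ?IH //.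
by rewrite setU1r.
Qed.

Lemma Sball_word A n w : w \in Sball A n ->
  exists ws, [/\ wordS A ws, size ws <= n & prodw ws = w].
Proof.
elim: n w => [|n IH] w.
  by rewrite /Sball /= inE => /eqP ->; exists [::].
rewrite Sball_S => /mulsgP[a x Ha Hx ->].
have [ws [H1 H2 H3]] := IH _ Ha.
case/setU1P: Hx => [->|Hx].
  by exists ws; split => //; [apply: leqW | rewrite mulg1].
exists (ws ++ [:: x]); split.
- by rewrite /wordS all_cat; apply/andP; split; [exact: H1 | rewrite /= Hx].
- by rewrite size_cat addn1.
- by rewrite prodw_cat /= mulg1 H3.
Qed.

Lemma Sball_sub A n : Sball A n \subset Sball A n.+1.
Proof. by apply/subsetP=> x Hx; rewrite Sball_S mem_mulg1 // setU11. Qed.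

Lemma Sball_mono A n m : n <= m -> Sball A n \subset Sball A m.
Proof.
move=> /subnK <-; elim: (m - n) => [|k IH] //.
by apply: subset_trans IH _; rewrite addSn Sball_sub.
Qed.

Lemma Sball_stab A n : Sball A n = Sball A n.+1 -> forall m, Sball A (m + n) = Sball A n.
Proof.
move=> E; elim=> [|m IH] //.
by rewrite addSn Sball_S IH -Sball_S -E.
Qed.

Lemma Sball_card A n :
  (exists2 m, m < n & Sball A m = Sball A m.+1) \/ n < #|Sball A n|.
Proof.
elim: n => [|n [[m H1 H2]|IH]].
- by right; rewrite /Sball /= cards1.
- by left; exists m => //; apply: ltnW.
case: (eqVneq (Sball A n) (Sball A n.+1)) => E.
  by left; exists n.
right; apply: leq_ltn_trans IH _; apply: proper_card.
by rewrite properEneq E Sball_sub.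
Qed.

Lemma Sball_fix A : exists2 m, m < #|W| & Sball A m = Sball A m.+1.
Proof.
case: (Sball_card A #|W|) => // H.
by have := max_card (mem (Sball A #|W|)); rewrite leqNgt H.
Qed.

Lemma Sball_all A : exists2 m, m < #|W| & <<A>> \subset Sball A m.
Proof.
have [m Hm E] := Sball_fix A; exists m => //.
have Hclos : forall k x y, x \in Sball A m -> y \in Sball A k -> x * y \in Sball A m.
  move=> k; elim: k => [|k IH] x y Hx.
    by rewrite /Sball /= inE => /eqP ->; rewrite mulg1.
  rewrite Sball_S => /mulsgP[a z Ha Hz ->].
  by rewrite mulgA E Sball_S mem_mulg ?IH.
have Hg : group_set (Sball A m).
  by apply/group_setP; split; [apply: one_Sball | move=> x y Hx Hy; apply: Hclos Hy].
rewrite -(gen_set_id Hg) genS //.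
apply/subsetP=> x Hx; rewrite -(Sball_stab E 1) Sball_S -[x]mul1g mem_mulg //.
  by rewrite one_Sball.
by rewrite setU1r.
Qed.

Lemma gen_word A x : x \in <<A>> -> exists ws, wordS A ws /\ prodw ws = x.
Proof.
move=> Hx; have [m _ /subsetP /(_ _ Hx) /Sball_word [ws [H1 _ H3]]] := Sball_all A.
by exists ws.
Qed.

End Words.

Section Len.
Variables (W : finGroupType) (S : {set W}).
Hypothesis S1 : (1 : W) \notin S.
Hypothesis Sinv : {in S, forall s, s * s = 1}.
Hypothesis Sgen : <<S>> = [set: W].
Local Notation len := (lengthS S).
Implicit Types (J K A : {set W}) (ws : seq W).

Lemma invS s : s \in S -> s^-1 = s.
Proof. by move=> Hs; apply/eqP; rewrite eq_invg_mul Sinv. Qed.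

Lemma prodw_rev ws : wordS S ws -> prodw (rev ws) = (prodw ws)^-1.
Proof.
rewrite /wordS; elim: ws => [|a ws IH] /=; first by rewrite invg1.
case/andP=> Ha Hws; rewrite rev_cons -cats1 prodw_cat IH // /= mulg1.
by rewrite invMg (invS Ha).
Qed.

Lemma len_le ws : wordS S ws -> len (prodw ws) <= size ws.
Proof.
move=> Hws; rewrite /lengthS.
case: (ltnP (size ws) #|W|) => h.
  rewrite leqNgt; apply/negP => /(before_find 0).
  by rewrite nth_iota // add0n word_Sball.
by apply: leq_trans (find_size _ _) _; rewrite size_iota.
Qed.

Lemma len_word w : exists ws, [/\ wordS S ws, prodw ws = w & size ws = len w].
Proof.
have [m Hm /subsetP Hsub] := Sball_all S.
have Hw : w \in Sball S m by apply: Hsub; rewrite Sgen inE.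
have Hhas : has (fun n => w \in Sball S n) (iota 0 #|W|).
  by apply/hasP; exists m => //; rewrite mem_iota.
have := nth_find 0 Hhas; rewrite -/(lengthS S w).
rewrite nth_iota ?add0n; last by rewrite -(size_iota 0 #|W|) -has_find.
case/Sball_word => ws [H1 H2 H3]; exists ws; split => //.
by apply/eqP; rewrite eqn_leq H2 -{1}H3 len_le.
Qed.

Lemma len1 : len 1 = 0.
Proof. by apply/eqP; rewrite -leqn0 (len_le (ws := [::])). Qed.

Lemma len_eq0 w : len w = 0 -> w = 1.
Proof. by have [[|a ws] [_ <- <-]] := len_word w. Qed.

Lemma lenM x y : len (x * y) <= len x + len y.
Proof.
have [wx [H1 <- <-]] := len_word x; have [wy [H2 <- <-]] := len_word y.
by rewrite -prodw_cat -size_cat len_le // /wordS all_cat; apply/andP.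
Qed.

Lemma lenV x : len x^-1 = len x.
Proof.
suff H : forall y, len y^-1 <= len y by apply/eqP; rewrite eqn_leq H /=; have := H x^-1; rewrite invgK.
move=> y; have [wy [H1 <- <-]] := len_word y.
by rewrite -prodw_rev // -(size_rev wy) len_le // /wordS all_rev.
Qed.

Lemma lenS1 s : s \in S -> len s = 1%N.
Proof.
move=> Hs; apply/eqP; rewrite eqn_leq.
have := len_le (ws := [:: s]); rewrite /= mulg1 => -> /=; last by rewrite /wordS /= Hs.
rewrite lt0n; apply/eqP => /len_eq0 E; by move: S1; rewrite -E Hs.
Qed.

Lemma lenSM s w : s \in S -> len (s * w) <= (len w).+1.
Proof. by move=> Hs; apply: leq_trans (lenM _ _) _; rewrite lenS1. Qed.


Definition pis (s : W) (p : W * bool) : W * bool := (s^-1 * p.1 * s, p.2 (+) (p.1 == s)).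

Lemma pis_inj s : injective (pis s).
Proof.
move=> [x b] [y c] [E1 E2].
have Exy : x = y by move: E1 => /mulIg /mulgI.
by subst y; move: E2; case: b; case: c; case: (x == s).
Qed.

Definition Pis s : {perm (W * bool)} := perm (@pis_inj s).

Fixpoint refl ws := if ws is a :: ws' then a :: map (fun r => a * r * a^-1) (refl ws') else [::].

Lemma size_refl ws : size (refl ws) = size ws.
Proof. by elim: ws => //= a ws IH; rewrite size_map IH. Qed.

Definition pword ws : {perm (W * bool)} := foldr (fun a acc => Pis a * acc) 1 ws.

Lemma pwordE ws x b : pword ws (x, b) =
  ((prodw ws)^-1 * x * prodw ws, b (+) odd (count_mem x (refl ws))).
Proof.
elim: ws x b => [|a ws IH] x b /=.
  by rewrite perm1 invg1 mul1g mulg1 addbF.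
rewrite permM permE /pis /= IH; congr (_, _).
  by rewrite invMg !mulgA.
rewrite count_map oddD addbA oddb (eq_sym a x).
f_equal; f_equal; apply: eq_count => r /=.
apply/eqP/eqP => [->|<-]; first by rewrite !mulgA mulgV mul1g mulgK.
by rewrite !mulgA mulVg mul1g mulgKV.
Qed.

Fixpoint alt (s t : W) n := if n is n'.+1 then s :: t :: alt s t n' else [::].

Lemma prodw_alt s t n : prodw (alt s t n) = (s * t) ^+ n.
Proof. by elim: n => [|n IH] //=; rewrite IH expgS mulgA. Qed.

Lemma pword_alt s t n : pword (alt s t n) = (Pis s * Pis t) ^+ n.
Proof. by elim: n => [|n IH] //=; rewrite IH expgS mulgA. Qed.

Lemma refl_alt s t n : s \in S -> t \in S ->
  refl (alt s t n) = [seq (s * t) ^+ j * s | j <- iota 0 n.*2].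
Proof.
move=> Hs Ht; elim: n => [|n IH] //=.
rewrite IH expg0 mul1g expg1 -!map_comp.
congr [:: _, _ & _]; first by rewrite (invS Hs).
rewrite -[2]/(2 + 0)%N iotaDl -map_comp; apply: eq_map => j /=.
rewrite (invS Hs) (invS Ht) expgD expgS expg1 !mulgA.
have C : (s*t)^+j * (s*t) = (s*t) * (s*t)^+j by rewrite -expgSr expgS.
by rewrite -(mulgA (s*t*(s*t)^+j) s t) -(mulgA (s*t)) C -(mulgA (s*t) s t) !mulgA.
Qed.

Lemma refl_alt_even s t x : s \in S -> t \in S ->
  ~~ odd (count_mem x (refl (alt s t #[s * t]))).
Proof.
move=> Hs Ht; rewrite refl_alt // -addnn iotaD map_cat count_cat add0n.
have -> : [seq (s*t)^+j * s | j <- iota #[s*t] #[s*t]] =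
          [seq (s*t)^+j * s | j <- iota 0 #[s*t]].
  rewrite -{1}[#[s*t]]addn0 iotaDl -map_comp; apply: eq_map => j /=.
  by rewrite expgD expg_order mul1g.
by rewrite addnn odd_double.
Qed.

Lemma gpowE (G : finGroupType) (x : G) n : gpow mulg 1 x n = x ^+ n.
Proof. by elim: n => [|n IH] //=; rewrite IH expgS. Qed.

Lemma Pis_rel s t : s \in S -> t \in S ->
  gpow mulg 1 (Pis s * Pis t) #[s * t] = 1.
Proof.
move=> Hs Ht; rewrite gpowE -pword_alt; apply/permP => -[x b].
rewrite pwordE perm1 prodw_alt expg_order invg1 mul1g mulg1.
by rewrite (negbTE (refl_alt_even x Hs Ht)) addbF.
Qed.


Variable phi : W -> {perm (W * bool)}.
Hypothesis phiM : forall x y, phi (x * y) = phi x * phi y.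
Hypothesis phiS : {in S, forall s, phi s = Pis s}.

Lemma phi1 : phi 1 = 1.
Proof. by apply: (mulgI (phi 1)); rewrite -phiM !mulg1. Qed.

Lemma phi_word ws : wordS S ws -> phi (prodw ws) = pword ws.
Proof.
rewrite /wordS; elim: ws => [|a ws IH] /=; first by move=> _; exact: phi1.
by case/andP=> Ha Hws; rewrite phiM phiS // IH.
Qed.

Definition N w x := (phi w (x, false)).2.

Lemma N_word ws x : wordS S ws -> N (prodw ws) x = odd (count_mem x (refl ws)).
Proof. by move=> H; rewrite /N phi_word // pwordE. Qed.

Lemma phiE w x b : phi w (x, b) = (w^-1 * x * w, b (+) N w x).
Proof.
have [ws [H1 <- _]] := len_word w.
by rewrite N_word // phi_word // pwordE.
Qed.

Lemma N_mul x y t : N (x * y) t = N x t (+) N y (x^-1 * t * x).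
Proof. by rewrite /N phiM permM phiE /= phiE. Qed.

Lemma N1 t : N 1 t = false.
Proof. by rewrite /N phi1 perm1. Qed.

Lemma Ns s : s \in S -> N s s = true.
Proof. by move=> Hs; rewrite /N phiS // permE /pis /= eqxx. Qed.

Lemma N_refl y s : s \in S -> N (y * s * y^-1) (y * s * y^-1) = true.
Proof.
move=> Hs; set t := y * s * y^-1.
have Hc : y^-1 * t * y = s by rewrite /t !mulgA mulVg mul1g mulgKV.
have E0 : N (y * y^-1) t = false by rewrite mulgV N1.
rewrite N_mul Hc in E0.
have Et : t = y * (s * y^-1) by rewrite /t mulgA.
rewrite {1}Et N_mul Hc N_mul Ns // mulVg mul1g.
by rewrite addbCA E0.
Qed.


Lemma refl_del ws j : wordS S ws -> j < size ws ->
  nth 1 (refl ws) j * prodw ws = prodw (delete j ws).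
Proof.
rewrite /wordS; elim: ws j => [|a ws IH] [|j] //= /andP[Ha Hws] Hj.
  by rewrite mulgA Sinv // mul1g.
rewrite (nth_map 1) ?size_refl // mulgA mulgKV -mulgA IH //.
Qed.

Lemma red_tail a ws : wordS S (a :: ws) -> size (a :: ws) = len (prodw (a :: ws)) ->
  size ws = len (prodw ws).
Proof.
rewrite /wordS /= => /andP[Ha Hws] E.
apply/eqP; rewrite eqn_leq len_le // andbT.
by rewrite -ltnS E lenSM.
Qed.

Lemma refl_uniq ws : wordS S ws -> size ws = len (prodw ws) -> uniq (refl ws).
Proof.
elim: ws => [|a ws IH] //= Hw E.
have Hws : wordS S ws by case/andP: Hw.
have Ha : a \in S by case/andP: Hw.
have E' := red_tail Hw E.
have fi : injective (fun r => a * r * a^-1) by move=> r1 r2 /mulIg /mulgI.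
rewrite map_inj_uniq // IH // andbT.
apply/mapP => -[r Hr Ea].
have Er : a = r by move/(congr1 (fun z => z * a)): Ea; rewrite mulgKV => /mulgI.
subst r.
have Hj : index a (refl ws) < size ws by rewrite -size_refl index_mem.
have := refl_del Hws Hj; rewrite nth_index // => Ed.
have := len_le (wordS_delete (index a (refl ws)) Hws).
rewrite -Ed size_delete // -E /=.
by case: (size ws) Hj => // n _; rewrite ltnNge leqnSn.
Qed.

Lemma N_red ws t : wordS S ws -> size ws = len (prodw ws) ->
  N (prodw ws) t = (t \in refl ws).
Proof. by move=> Hw E; rewrite N_word // count_uniq_mem ?oddb // refl_uniq. Qed.

Lemma N_lt w t : N w t -> len (t * w) < len w.
Proof.
have [ws [Hw <- E]] := len_word w.
rewrite N_red // => Ht.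
have Hj : index t (refl ws) < size ws by rewrite -size_refl index_mem.
have := refl_del Hw Hj; rewrite nth_index // => ->.
apply: leq_ltn_trans (len_le (wordS_delete _ Hw)) _.
by rewrite size_delete // -E; case: (size ws) Hj.
Qed.

Lemma N_gt_gen w t : t * t = 1 -> N t t -> ~~ N w t -> len w < len (t * w).
Proof.
move=> Htt Ntt Nwt.
have : N (t * w) t by rewrite N_mul Ntt mulVg mul1g (negbTE Nwt).
by move/N_lt; rewrite mulgA Htt mul1g.
Qed.

Lemma lenS s w : s \in S -> len (s * w) = (len w).+1 \/ (len (s * w)).+1 = len w.
Proof.
move=> Hs; case E: (N w s).
  right; apply/eqP; rewrite eqn_leq N_lt //=.
  by have := lenSM (s * w) Hs; rewrite mulgA Sinv // mul1g.
left; apply/eqP; rewrite eqn_leq lenSM //=.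
by apply: N_gt_gen; rewrite ?Sinv ?Ns ?E.
Qed.

Lemma exchange s ws : s \in S -> wordS S ws -> size ws = len (prodw ws) ->
  len (s * prodw ws) < len (prodw ws) ->
  exists2 j, j < size ws & s * prodw ws = prodw (delete j ws).
Proof.
move=> Hs Hw E Hlt.
have Ns' : N (prodw ws) s.
  apply/negPn/negP => H.
  by have := N_gt_gen (Sinv Hs) (Ns Hs) H; rewrite ltnNge ltnW.
rewrite N_red // in Ns'.
have Hj : index s (refl ws) < size ws by rewrite -size_refl index_mem.
by exists (index s (refl ws)) => //; rewrite -refl_del // nth_index.
Qed.


Lemma reduce J ws : J \subset S -> wordS J ws ->
  exists vs, [/\ wordS J vs, prodw vs = prodw ws & size vs = len (prodw ws)].
Proof.
move=> JS; elim: ws => [|a ws IH] /=.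
  by move=> _; exists [::]; rewrite len1.
rewrite {1}/wordS /= => /andP[Ha Hws].
have [vs [Hv Ep Es]] := IH Hws.
have HaS : a \in S by apply: (subsetP JS).
have HvS : wordS S vs := wordS_sub JS Hv.
case: (lenS (prodw ws) HaS) => Hl.
  exists (a :: vs); split.
  - by rewrite /wordS /= Ha.
  - by rewrite /= Ep.
  - by rewrite /= Hl Es.
have [j Hj Ed] : exists2 j, j < size vs & a * prodw vs = prodw (delete j vs).
  by apply: exchange; rewrite ?Ep // -Hl.
exists (delete j vs); split.
- exact: wordS_delete.
- by rewrite -Ed Ep.
- by rewrite size_delete // Es -Hl.
Qed.

Lemma redJ J x : J \subset S -> x \in <<J>> ->
  exists ws, [/\ wordS J ws, prodw ws = x & size ws = len x].
Proof.
move=> JS /gen_word [ws [Hw <-]].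
by have [vs [H1 H2 H3]] := reduce JS Hw; exists vs.
Qed.

Lemma red_in J ws : J \subset S -> wordS S ws -> size ws = len (prodw ws) ->
  prodw ws \in <<J>> -> wordS J ws.
Proof.
move=> JS; elim: ws => [|a ws IH] //= Hw E Hin.
have Ha : a \in S by case/andP: Hw.
have Hws : wordS S ws by case/andP: Hw.
have E' := red_tail Hw E.
have Hlt : len (a * (a * prodw ws)) < len (a * prodw ws).
  by rewrite mulgA Sinv // mul1g -E' -E /=.
have [vs [Hv Ev Es]] := redJ JS Hin.
have [j Hj Ed] : exists2 j, j < size vs & a * prodw vs = prodw (delete j vs).
  apply: exchange => //; first exact: wordS_sub JS Hv.
    by rewrite Ev Es.
  by rewrite Ev.
have Hai : a \in <<J>>.
  have -> : a = (a * prodw vs) * (prodw vs)^-1 by rewrite mulgK.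
  rewrite groupM ?groupV //; first by rewrite Ed wordS_gen // wordS_delete.
  by rewrite Ev.
have HaJ : a \in J.
  have [[|b [|c us]] [Hu Eu Su]] := redJ JS Hai; rewrite (lenS1 Ha) in Su => //.
  by move: Hu Eu; rewrite /wordS /= mulg1 andbT => Hb <-.
rewrite /wordS /= HaJ /=; apply: IH => //.
by rewrite -(mulKg a (prodw ws)) (invS Ha) groupM // mem_gen.
Qed.

Lemma C1 J w : J \subset S -> (forall v, v \in <<J>> -> len w <= len (v * w)) ->
  forall v, v \in <<J>> -> len (v * w) = (len v + len w)%N.
Proof.
move=> JS Hmin.
suff H : forall vs, wordS J vs -> size vs = len (prodw vs) ->
    len (prodw vs * w) = (size vs + len w)%N.
  by move=> v /(redJ JS) [vs [Hv <- Es]]; rewrite H // Es.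
elim=> [|a vs IH] /=; first by rewrite mul1g.
move=> Hw E.
have Ha : a \in J by case/andP: Hw.
have HaS : a \in S by apply: (subsetP JS).
have Hv : wordS J vs by case/andP: Hw.
have HvS := wordS_sub JS Hv.
have E' := red_tail (wordS_sub JS (Hw : wordS J (a :: vs))) E.
have IH' := IH Hv E'.
case: (lenS (prodw vs * w) HaS) => Hl; first by rewrite -mulgA Hl IH' addSn.
exfalso.
have [ww [Hww Eww Sww]] := len_word w.
have Hcat : wordS S (vs ++ ww) by rewrite /wordS all_cat; apply/andP.
have Ecat : prodw (vs ++ ww) = prodw vs * w by rewrite prodw_cat Eww.
have [j Hj Ed] : exists2 j, j < size (vs ++ ww) &
    a * prodw (vs ++ ww) = prodw (delete j (vs ++ ww)).
  apply: exchange => //; first by rewrite Ecat IH' size_cat Sww.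
  by rewrite Ecat -Hl.
case: (ltnP j (size vs)) => Hjv.
  rewrite delete_cat_l // !prodw_cat Eww mulgA in Ed.
  move/mulIg: Ed => Ed.
  have := len_le (wordS_delete j HvS); rewrite -Ed size_delete //.
  rewrite -E; by case: (size vs) Hjv => // n _; rewrite ltnNge leqW.
rewrite delete_cat_r // !prodw_cat Eww mulgA in Ed.
set w' := prodw (delete (j - size vs) ww) in Ed.
have Hw' : w' = (prodw vs)^-1 * a * prodw vs * w.
  by apply: (mulgI (prodw vs)); rewrite -Ed !mulgA mulgV mul1g.
have Hjw : j - size vs < size ww by rewrite size_cat in Hj; rewrite ltn_subLR.
have : len w' < len w.
  apply: leq_ltn_trans (len_le (wordS_delete _ Hww)) _.
  rewrite size_delete // Sww; rewrite Sww in Hjw; by case: (len w) Hjw.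
rewrite Hw' ltnNge Hmin //.
by rewrite !groupM ?groupV ?wordS_gen // mem_gen.
Qed.


Lemma nodesc J b : (forall s, s \in J -> ~~ (len (s * b) < len b)) -> J \subset S ->
  forall s, s \in J -> len b < len (s * b).
Proof.
move=> H JS s Hs; have HsS : s \in S by apply: (subsetP JS).
case: (lenS b HsS) => [->//|E]; move: (H s Hs); by rewrite -E leqnn.
Qed.

Lemma descend J J' : J \subset S -> J' \subset S -> forall n b, b \in <<J'>> -> len b <= n ->
  exists m, [/\ m \in <<J'>>, m * b^-1 \in <<J>> & forall s, s \in J -> len m < len (s * m)].
Proof.
move=> JS J'S; elim=> [|n IH] b Hb Hn;
  (case: (boolP [exists s in J, len (s * b) < len b]) => [/existsP [s /andP[Hs Hlt]] | Hno];
   last first).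
- exists b; split => //; first by rewrite mulgV group1.
  apply: nodesc => // s Hs; apply/negP => Hlt; move/negP: Hno; apply.
  by apply/existsP; exists s; rewrite Hs.
- by move: Hn; rewrite leqn0 => /eqP E; rewrite E in Hlt.
- exists b; split => //; first by rewrite mulgV group1.
  apply: nodesc => // s Hs; apply/negP => Hlt; move/negP: Hno; apply.
  by apply/existsP; exists s; rewrite Hs.
have HsS : s \in S by apply: (subsetP JS).
have [vs [Hv Ev Es]] := redJ J'S Hb.
have [j Hj Ed] : exists2 j, j < size vs & s * prodw vs = prodw (delete j vs).
  apply: exchange => //; first exact: wordS_sub J'S Hv.
    by rewrite Ev Es.
  by rewrite Ev.
have Hsb : s * b \in <<J'>> by rewrite -Ev Ed wordS_gen // wordS_delete.
have [m [Hm1 Hm2 Hm3]] := IH (s * b) Hsb (leq_trans Hlt Hn).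
exists m; split => //.
have -> : m * b^-1 = m * (s * b)^-1 * s by rewrite invMg mulgA mulgKV.
by rewrite groupM // mem_gen.
Qed.

Lemma parab_min J J' a b : J \subset S -> J' \subset S -> a \in <<J>> -> b \in <<J'>> ->
  (forall u, u \in <<J>> -> len (a * b) <= len (u * (a * b))) -> a * b \in <<J'>>.
Proof.
move=> JS J'S Ha Hb.
have [m [Hm1 Hm2 Hm3]] := descend JS J'S Hb (leqnn _).
have Hu : m * (a * b)^-1 \in <<J>> by rewrite invMg mulgA groupM ?groupV.
move: Hu; move Ew : (a * b) => w Hu Hmin.
move Eu : (m * w^-1) => u in Hu.
have Hmw : m = u * w by rewrite -Eu mulgKV.
have Hadd := C1 JS Hmin Hu.
case: (eqVneq u 1) => [Hu1|Hun1]; first by rewrite Hmw Hu1 mul1g in Hm1.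
have [[|s rest] [Hr Er Sr]] := redJ JS Hu; first by rewrite -Er eqxx in Hun1.
have Hs : s \in J by case/andP: Hr.
have HsS : s \in S by apply: (subsetP JS).
have Hrest : wordS S rest by case/andP: (wordS_sub JS Hr).
have Hsu : len (s * u) <= size rest.
  by rewrite -Er /= mulgA Sinv // mul1g len_le.
exfalso; have := Hm3 s Hs; rewrite Hmw mulgA.
apply/negP; rewrite -leqNgt.
apply: leq_trans (lenM _ _) _.
by rewrite Hadd -Sr /= leq_add2r (leq_trans Hsu) // leqnSn.
Qed.

Lemma max_uniq w0 w1 : (forall w, len w <= len w0) -> (forall w, len w <= len w1) ->
  w0 = w1.
Proof.
move=> H0 H1; set x := w0^-1 * w1.
have Ew1 : w1 = w0 * x by rewrite /x mulKVg.
case: (eqVneq x 1) => [Hx1|Hxn1]; first by rewrite Ew1 Hx1 mulg1.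
have [[|s rest] [Hw Ex Sx]] := len_word x; first by rewrite -Ex eqxx in Hxn1.
have Hs : s \in S by case/andP: Hw.
have Nxs : N x s.
  have Hsz : size (s :: rest) = len (prodw (s :: rest)) by rewrite Ex Sx.
  by rewrite -Ex N_red // mem_head.
set t := w0 * s * w0^-1.
have Htt : t * t = 1.
  by rewrite /t !mulgA mulgKV -(mulgA w0) Sinv // mulg1 mulgV.
have Hlt : len (t * w0) < len w0.
  rewrite /t mulgKV -lenV invMg (invS Hs).
  case: (lenS w0^-1 Hs) => E; last by rewrite -(lenV w0) -E.
  by move: (H0 (s * w0^-1)); rewrite E lenV ltnn.
have Nw0t : N w0 t.
  apply/negPn/negP => H.
  by have := N_gt_gen Htt (N_refl w0 Hs) H; rewrite ltnNge ltnW.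
have Nw1t : ~~ N w1 t.
  rewrite Ew1 N_mul Nw0t.
  have -> : w0^-1 * t * w0 = s by rewrite /t !mulgA mulVg mul1g mulgKV.
  by rewrite Nxs.
have := N_gt_gen Htt (N_refl w0 Hs) Nw1t.
by rewrite ltnNge H1.
Qed.


Variables (Ch : Type) (delta : Ch -> Ch -> W).
Hypothesis WD1 : forall C D, delta C D = 1 <-> C = D.
Hypothesis WD2 : forall C D C' s, s \in S -> delta C' C = s ->
  (delta C' D = s * delta C D \/ delta C' D = delta C D) /\
  (len (s * delta C D) = (len (delta C D)).+1 -> delta C' D = s * delta C D).
Hypothesis WD3 : forall C D s, s \in S ->
  exists C', delta C' C = s /\ delta C' D = s * delta C D.

Lemma d_refl C : delta C C = 1.
Proof. by apply/WD1. Qed.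

Lemma B1gen ws : wordS S ws -> forall X D Cc u,
  len (prodw (rev ws) * u) = (size ws + len u)%N -> delta X D = prodw ws ->
  delta X Cc = u -> delta D Cc = prodw (rev ws) * u.
Proof.
elim: ws => [|a ws IH] Hw X D Cc u Hl Ed Eu.
  by move/WD1: Ed => <-; rewrite mul1g.
have Ha : a \in S by case/andP: Hw.
have Hws : wordS S ws by case/andP: Hw.
have Erev : prodw (rev (a :: ws)) = prodw (rev ws) * a.
  by rewrite rev_cons -cats1 prodw_cat /= mulg1.
have [X1 [E1 E2]] := WD3 X D Ha.
rewrite Ed /= mulgA Sinv // mul1g in E2.
rewrite Erev /= in Hl.
have Hlen : len (a * u) = (len u).+1.
  apply/eqP; rewrite eqn_leq lenSM //=.
  have : (size ws + (len u).+1 <= size ws + len (a * u))%N.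
    rewrite -addSnnS -Hl -mulgA; apply: leq_trans (lenM _ _) _.
    by rewrite leq_add2r -(size_rev ws) len_le // /wordS all_rev.
  by rewrite leq_add2l.
have E3 : delta X1 Cc = a * u.
  by have [_ H] := WD2 Cc Ha E1; rewrite Eu in H; apply: H.
rewrite Erev -mulgA; apply: (IH Hws X1 D Cc (a * u)) => //.
by rewrite mulgA Hl Hlen addnS addSn.
Qed.

Lemma dsym C D : delta D C = (delta C D)^-1.
Proof.
have [ws [Hw Ew Sw]] := len_word (delta C D).
have := B1gen Hw (X := C) (D := D) (Cc := C) (u := 1).
rewrite mulg1 prodw_rev // lenV Ew Sw len1 addn0 d_refl.
by move=> H; apply: H.
Qed.

Lemma dsymV C D : (delta C D)^-1 = delta D C.
Proof. by rewrite (dsym D C) invgK. Qed.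

Lemma walk2 Z Z' X s : s \in S -> delta Z Z' = s ->
  delta X Z' = delta X Z \/ delta X Z' = delta X Z * s.
Proof.
move=> Hs E.
have E' : delta Z' Z = s by rewrite dsym E invS.
have [[H|H] _] := WD2 X Hs E'.
  by right; rewrite -dsymV H invMg dsymV invS.
by left; rewrite -dsymV H dsymV.
Qed.

Lemma walkJ J : J \subset S -> forall ws, wordS J ws -> forall Y Z,
  delta Y Z = prodw ws -> forall X, (delta X Y)^-1 * delta X Z \in <<J>>.
Proof.
move=> JS; elim=> [|a ws IH] Hw Y Z Eyz X.
  by move/WD1: Eyz => ->; rewrite mulVg group1.
have Ha : a \in J by case/andP: Hw.
have HaS : a \in S by apply: (subsetP JS).
have Hws : wordS J ws by case/andP: Hw.
have [Y1 [E1 E2]] := WD3 Y Z HaS.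
rewrite Eyz /= mulgA Sinv // mul1g in E2.
have E1' : delta Y Y1 = a by rewrite dsym E1 invS.
have := IH Hws _ _ E2 X.
case: (walk2 X HaS E1') => ->//.
have -> : (delta X Y)^-1 * delta X Z = a * ((delta X Y * a)^-1 * delta X Z).
  by rewrite invMg !mulgA mulgV mul1g.
by move=> H; rewrite groupM // mem_gen.
Qed.

Lemma walkJ' J X Y Z : J \subset S -> delta Y Z \in <<J>> ->
  (delta X Y)^-1 * delta X Z \in <<J>>.
Proof. by move=> JS /gen_word [ws [Hw Ew]]; exact: (walkJ JS Hw (esym Ew) X). Qed.

Lemma res_trans J X Y Z : J \subset S -> delta X Y \in <<J>> -> delta Y Z \in <<J>> ->
  delta X Z \in <<J>>.
Proof.
move=> JS H1 H2; have := walkJ' X JS H2.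
by move=> H; rewrite -(mulKVg (delta X Y) (delta X Z)) groupM.
Qed.

Lemma res_sym J X Y : delta X Y \in <<J>> -> delta Y X \in <<J>>.
Proof. by rewrite dsym groupV. Qed.

Lemma realize J : J \subset S -> forall v, v \in <<J>> -> forall X Cc,
  exists E, delta E Cc = v * delta X Cc /\ delta X E \in <<J>>.
Proof.
move=> JS v /gen_word [ws [Hw <-]] X Cc.
elim: ws Hw => [|a ws IH] Hw.
  by exists X; rewrite mul1g d_refl group1.
have Ha : a \in J by case/andP: Hw.
have HaS : a \in S by apply: (subsetP JS).
have Hws : wordS J ws by case/andP: Hw.
have [E' [H1 H2]] := IH Hws.
have [E [E1 E2]] := WD3 E' Cc HaS.
exists E; split; first by rewrite E2 H1 /= mulgA.
have E1' : delta E' E = a by rewrite dsym E1 invS.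
by case: (walk2 X HaS E1') => [->|->] //; rewrite groupM // mem_gen.
Qed.


Variables (I : finType) (typ : I -> W) (ch : I -> Ch) (C : Ch).
Hypothesis Htyp : forall i, typ i \in S.

Lemma flag_all : (forall i j, exists E, delta (ch i) E \in <<S :\ typ i>> /\
                                    delta (ch j) E \in <<S :\ typ j>>) ->
  forall l : seq I, exists D, forall i, i \in l -> delta (ch i) D \in <<S :\ typ i>>.
Proof.
move=> Hpair; have JS : forall i, S :\ typ i \subset S by move=> i; apply: subD1set.
elim=> [|k l [Ds HDs]]; first by exists C.
have Hex : exists n, exists F, delta (ch k) F \in <<S :\ typ k>> /\ len (delta F Ds) = n.
  by have [E [HE _]] := Hpair k k; exists (len (delta E Ds)), E.
have [n0 [[F [HF1 HF2]] Hmin]] := classical_min Hex.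
have Hm : forall u, u \in <<S :\ typ k>> -> len (delta F Ds) <= len (u * delta F Ds).
  move=> u Hu; have [E [E1 E2]] := realize (JS k) Hu F Ds.
  rewrite HF2 -E1; apply: Hmin; exists E; split => //.
  exact: res_trans (JS k) HF1 E2.
exists F => i; rewrite inE => /orP[/eqP -> // | Hi].
have [G [HGi HGk]] := Hpair i k.
have HFG : delta F G \in <<S :\ typ k>> by apply: res_trans (JS k) (res_sym HF1) HGk.
have HGD : delta G Ds \in <<S :\ typ i>> by apply: res_trans (JS i) (res_sym HGi) (HDs i Hi).
have Hb := walkJ' F (JS i) HGD.
have Hw := parab_min (JS k) (JS i) HFG Hb.
rewrite mulKVg in Hw.
have HFD := Hw Hm.
exact: res_trans (JS i) (HDs i Hi) (res_sym HFD).
Qed.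

Lemma main_in : (forall i j, exists E, opposite S delta C E /\
        has_vertex S delta (typ i) (ch i) E /\ has_vertex S delta (typ j) (ch j) E) ->
    exists E, opposite S delta C E /\
      forall i, has_vertex S delta (typ i) (ch i) E.
Proof.
move=> HpairO.
have JS : forall i, S :\ typ i \subset S by move=> i; apply: subD1set.
have Hpair : forall i j, exists E, delta (ch i) E \in <<S :\ typ i>> /\
                                    delta (ch j) E \in <<S :\ typ j>>.
  by move=> i j; have [E [_ [H1 H2]]] := HpairO i j; exists E.
have [Ds HDs'] := flag_all Hpair (enum I).
have HDs : forall i, delta (ch i) Ds \in <<S :\ typ i>> by move=> i; apply: HDs'; rewrite mem_enum.
case: (@arg_maxnP W 1 predT len isT) => w0 _ Hw0'.
have Hw0 : forall w, len w <= len w0 by move=> w; apply: Hw0'.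
have Hi : forall i, delta Ds C * w0 \in <<S :\ typ i>>.
  move=> i; have [E [Hop [HE _]]] := HpairO i i.
  have Ew0 : delta C E = w0 by apply: max_uniq.
  have HDE : delta Ds E \in <<S :\ typ i>> by apply: res_trans (JS i) (res_sym (HDs i)) HE.
  by have := walkJ' C (JS i) HDE; rewrite dsymV Ew0.
set K := [set s in S | [forall i, s != typ i]].
have KS : K \subset S by apply/subsetP => x; rewrite inE => /andP[].
have KJ : forall i, K \subset S :\ typ i.
  by move=> i; apply/subsetP => x; rewrite !inE => /andP[-> /forallP ->].
set v := (delta Ds C * w0)^-1.
have Hv : v \in <<K>>.
  have [ws [Hw Ew Sw]] := len_word v.
  rewrite -Ew; apply: wordS_gen; apply/allP => x Hx.
  have HxS : x \in S by move/allP: Hw; apply.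
  rewrite inE HxS /=; apply/forallP => i.
  have : wordS (S :\ typ i) ws.
    apply: (red_in (JS i) Hw); first by rewrite Ew.
    by rewrite Ew /v groupV Hi.
  by move/allP/(_ x Hx); rewrite in_setD1 => /andP[].
have [E [E1 E2]] := realize KS Hv Ds C.
exists E; split.
  have EE : delta C E = w0 by rewrite -dsymV E1 /v invMg invgK mulKg.
  by move=> w; rewrite EE.
move=> i; rewrite /has_vertex.
apply: res_trans (JS i) (HDs i) _.
by apply: (subsetP (genS (KJ i))).
Qed.

End Len.

Theorem lemma4p12 (W : finGroupType) (S : {set W}) (Ch : Type)
    (delta : Ch -> Ch -> W) (C : Ch) :
  coxeter_system S -> is_building S delta -> Opp_is_flag S delta C.
Proof.
case=> S1 Sinv Sgen Huniv [WD1 WD2 WD3] I typ ch Htyp Hpair.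
have Hg : is_group (mulg : {perm (W * bool)} -> _ -> _) 1 invg.
  by split; [exact: mulgA | exact: mul1g | exact: mulg1 | exact: mulVg | exact: mulgV].
have [phi [phiM phiS]] := Huniv _ _ _ _ Hg (@Pis W)
  (fun s t Hs Ht => Pis_rel Sinv Hs Ht).
exact: (main_in S1 Sinv Sgen phiM phiS WD1 WD2 WD3 Hpair).
Qed.
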